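(* Let $\mathbb{K}$ be any field and $n\geq 4$. Let $S$ be a linear subspace of $\mathrm{S}_n(\mathbb{K})$ in which every matrix has rank at most $3$. For $M\in S$ let $P(M)\in\mathrm{S}_{n-1}(\mathbb{K})$ be the upper-left $(n-1)\times(n-1)$ submatrix of $M$. Assume that $P(S)\subset\mathrm{WS}_{n-1,1,1}(\mathbb{K})$ and $\dim P(S)>5$. Then $S$ is congruent to a subspace of $\mathrm{WS}_{n,1,1}(\mathbb{K})$.
   Context: $\mathrm{S}_p(\mathbb{K})$ denotes the $p\times p$ symmetric matrices. $\mathrm{WS}_{p,1,1}(\mathbb{K})$ is the space of $M=(m_{i,j})\in\mathrm{S}_p(\mathbb{K})$ with $m_{i,j}=0$ whenever $i>1$, $j>1$ and $\max(i,j)>2$. Subsets $\mathcal{V},\mathcal{W}$ of $\mathrm{M}_n(\mathbb{K})$ are congruent if $\mathcal{V}=Q\mathcal{W}Q^T$ for some $Q\in\mathrm{GL}_n(\mathbb{K})$. *)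

(* Defs.v *)
From HB Require Import structures.
From mathcomp Require Import all_boot all_order all_algebra.
Set Implicit Arguments. Unset Strict Implicit. Unset Printing Implicit Defensive.
Import GRing.Theory.
Local Open Scope ring_scope.

(* WS_{p,1,1}(K): symmetric p x p matrices M with m_{i,j} = 0 whenever
   i > 1, j > 1 and max(i,j) > 2 (1-based); with 0-based indices:
   i >= 1, j >= 1 and max(i,j) >= 2. *)
Definition WS11 (K : fieldType) (p : nat) (M : 'M[K]_p) : Prop :=
  M^T = M /\
  (forall i j : 'I_p, (1 <= i)%N -> (1 <= j)%N -> (2 <= maxn i j)%N -> M i j = 0).

Definition upleft (K : fieldType) (n : nat) (M : 'M[K]_n) : 'M[K]_n.-1 :=
  \matrix_(i < n.-1, j < n.-1) M (widen_ord (leq_pred n) i) (widen_ord (leq_pred n) j).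

(* Main.v *)
Require Import Defs.
From HB Require Import structures.
From mathcomp Require Import all_boot all_order all_algebra.
From mathcomp Require Import ring zify.
From Stdlib Require Import Classical.
Import GRing.Theory.
Set Implicit Arguments. Unset Strict Implicit. Unset Printing Implicit Defensive.
Local Open Scope ring_scope.

Lemma det22 (K : fieldType) (A : 'M[K]_2) : \det A = A 0 0 * A 1 1 - A 0 1 * A 1 0.
Proof.
rewrite (expand_det_row _ 0) !big_ord_recl big_ord0 /cofactor !det_mx11 /= !mxE /=.
rewrite addr0.
have e1 : lift 0 (0 : 'I_1) = 1 :> 'I_2 by apply/val_inj.
have e2 : lift (lift ord0 ord0) (0 : 'I_1) = 0 :> 'I_2 by apply/val_inj.
have e3 : lift ord0 ord0 = 1 :> 'I_2 by apply/val_inj.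
rewrite ?e1 ?e2 ?e3 expr0 expr1 mul1r mulN1r mulrN.
have e4 : lift 1 (0 : 'I_1) = 0 :> 'I_2 by apply/val_inj.
by rewrite e4.
Qed.

Definition bf (K : fieldType) (n : nat) (M : 'M[K]_n) (u v : 'rV[K]_n) : K :=
  (u *m M *m v^T) 0 0.

Lemma bf_e (K : fieldType) n (M : 'M[K]_n) i j : bf M 'e_i 'e_j = M i j.
Proof. by rewrite /bf -rowE trmx_delta -colE !mxE. Qed.

Lemma bfDl (K : fieldType) n (M : 'M[K]_n) u u' v :
  bf M (u + u') v = bf M u v + bf M u' v.
Proof. by rewrite /bf !mulmxDl mxE. Qed.

Lemma bfZl (K : fieldType) n (M : 'M[K]_n) a u v :
  bf M (a *: u) v = a * bf M u v.
Proof. by rewrite /bf -!scalemxAl mxE. Qed.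

Lemma bfNl (K : fieldType) n (M : 'M[K]_n) u v :
  bf M (- u) v = - bf M u v.
Proof. by rewrite /bf !mulNmx mxE. Qed.

Lemma bfDr (K : fieldType) n (M : 'M[K]_n) u v v' :
  bf M u (v + v') = bf M u v + bf M u v'.
Proof. by rewrite /bf linearD /= mulmxDr mxE. Qed.

Lemma bfZr (K : fieldType) n (M : 'M[K]_n) a u v :
  bf M u (a *: v) = a * bf M u v.
Proof. by rewrite /bf linearZ /= -scalemxAr mxE. Qed.

Lemma bfNr (K : fieldType) n (M : 'M[K]_n) u v :
  bf M u (- v) = - bf M u v.
Proof. by rewrite /bf linearN /= mulmxN mxE. Qed.

Lemma bfBl (K : fieldType) n (M : 'M[K]_n) u u' v :
  bf M (u - u') v = bf M u v - bf M u' v.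
Proof. by rewrite bfDl bfNl. Qed.

Lemma bfBr (K : fieldType) n (M : 'M[K]_n) u v v' :
  bf M u (v - v') = bf M u v - bf M u v'.
Proof. by rewrite bfDr bfNr. Qed.

Lemma bfM (K : fieldType) n (M N : 'M[K]_n) u v :
  bf (M + N) u v = bf M u v + bf N u v.
Proof. by rewrite /bf mulmxDr mulmxDl mxE. Qed.

Lemma bf_sym (K : fieldType) n (M : 'M[K]_n) u v :
  M^T = M -> bf M u v = bf M v u.
Proof.
move=> hs; rewrite /bf.
have -> : (v *m M *m u^T) 0 0 = ((v *m M *m u^T)^T) 0 0 by rewrite [in RHS]mxE.
by rewrite !trmx_mul trmxK hs mulmxA.
Qed.

Definition pair2 (K : fieldType) n (x y : 'rV[K]_n) : 'M[K]_(2, n) :=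
  \matrix_(i < 2) (if i == 0 then x else y).

Lemma pair2E (K : fieldType) n (M : 'M[K]_n) x y x' y' i j :
  (pair2 x y *m M *m (pair2 x' y')^T) i j =
  bf M (if i == 0 then x else y) (if j == 0 then x' else y').
Proof.
rewrite /bf !mxE; apply: eq_bigr => k _.
rewrite !mxE; congr (_ * _).
  by apply: eq_bigr => l _; rewrite !mxE.
Qed.

Lemma ord2 (i : 'I_2) : i = 0 \/ i = 1.
Proof. by case: i => [[|[|k]] Hi]; [left; apply/val_inj | right; apply/val_inj | ]. Qed.

Lemma det_pair2 (K : fieldType) n (M : 'M[K]_n) x y x' y' :
  \det (pair2 x y *m M *m (pair2 x' y')^T) =
  bf M x x' * bf M y y' - bf M x y' * bf M y x'.
Proof. by rewrite det22 !pair2E. Qed.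

Lemma pair2_zero (K : fieldType) n (M : 'M[K]_n) x y x' y' :
  bf M x x' = 0 -> bf M x y' = 0 -> bf M y x' = 0 -> bf M y y' = 0 ->
  pair2 x y *m M *m (pair2 x' y')^T = 0.
Proof.
move=> h1 h2 h3 h4; apply/matrixP => i j; rewrite pair2E mxE.
by case: (ord2 i) => ->; case: (ord2 j) => ->.
Qed.

Lemma rank4l (K : fieldType) n (M : 'M[K]_n) x1 y1 x1' y1' x2 y2 x2' y2' :
  bf M x1 x2' = 0 -> bf M x1 y2' = 0 -> bf M y1 x2' = 0 -> bf M y1 y2' = 0 ->
  (bf M x1 x1' * bf M y1 y1' - bf M x1 y1' * bf M y1 x1') *
  (bf M x2 x2' * bf M y2 y2' - bf M x2 y2' * bf M y2 x2') != 0 ->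
  (4 <= \rank M)%N.
Proof.
move=> h1 h2 h3 h4 hd.
set A := col_mx (pair2 x1 y1) (pair2 x2 y2).
set B := col_mx (pair2 x1' y1') (pair2 x2' y2').
have hr : \rank (A *m M *m B^T) = 4%N.
  apply: mxrank_unit; rewrite unitmxE unitfE.
  rewrite /A /B tr_col_mx mul_col_mx mul_col_row (pair2_zero h1 h2 h3 h4).
  rewrite (@det_lblock _ 2 2).
  by rewrite !det_pair2.
rewrite -hr; apply: leq_trans (mxrankM_maxl _ _) _; exact: mxrankM_maxr.
Qed.

Lemma rank4u (K : fieldType) n (M : 'M[K]_n) x1 y1 x1' y1' x2 y2 x2' y2' :
  bf M x2 x1' = 0 -> bf M x2 y1' = 0 -> bf M y2 x1' = 0 -> bf M y2 y1' = 0 ->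
  (bf M x1 x1' * bf M y1 y1' - bf M x1 y1' * bf M y1 x1') *
  (bf M x2 x2' * bf M y2 y2' - bf M x2 y2' * bf M y2 x2') != 0 ->
  (4 <= \rank M)%N.
Proof.
move=> h1 h2 h3 h4 hd.
set A := col_mx (pair2 x1 y1) (pair2 x2 y2).
set B := col_mx (pair2 x1' y1') (pair2 x2' y2').
have hr : \rank (A *m M *m B^T) = 4%N.
  apply: mxrank_unit; rewrite unitmxE unitfE.
  rewrite /A /B tr_col_mx mul_col_mx mul_col_row (pair2_zero h1 h2 h3 h4) det_ublock.
  by rewrite !det_pair2.
rewrite -hr; apply: leq_trans (mxrankM_maxl _ _) _; exact: mxrankM_maxr.
Qed.

Definition o4 (p : nat) : 'I_p.+4 := ord0.
Definition i14 (p : nat) : 'I_p.+4 := @Ordinal p.+4 1 isT.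
Definition w4 (p : nat) : 'I_p.+4 := ord_max.
Definition J4 (p : nat) (x : 'I_p.+4) : bool := (2 <= x)%N && (x < p.+3)%N.

Definition WSh (K : fieldType) p (M : 'M[K]_p.+4) : Prop :=
  forall x y : 'I_p.+4, (1 <= x < p.+3)%N -> (1 <= y < p.+3)%N ->
    (2 <= maxn x y)%N -> M x y = 0.

Lemma msym (K : fieldType) n (M : 'M[K]_n) i j : M^T = M -> M i j = M j i.
Proof. by move=> hs; rewrite -[in LHS]hs mxE. Qed.

Lemma JJ0 (K : fieldType) p (M : 'M[K]_p.+4) k l :
  WSh M -> J4 k -> J4 l -> M k l = 0.
Proof. move=> h /andP[? ?] /andP[? ?]; apply: h; lia. Qed.

Lemma J10 (K : fieldType) p (M : 'M[K]_p.+4) k :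
  WSh M -> J4 k -> M (i14 p) k = 0.
Proof. move=> h /andP[? ?]; apply: h => /=; lia. Qed.

Lemma F1 (K : fieldType) p (M : 'M[K]_p.+4) :
  M^T = M -> (\rank M <= 3)%N -> WSh M ->
  forall k l, J4 k -> J4 l ->
    M (o4 p) k * M (w4 p) l = M (o4 p) l * M (w4 p) k.
Proof.
move=> hs hr hw k l hk hl; apply/eqP; rewrite -subr_eq0; apply/negPn/negP => hD.
have := @rank4l K _ M 'e_k 'e_l 'e_(o4 p) 'e_(w4 p) 'e_(o4 p) 'e_(w4 p) 'e_k 'e_l.
rewrite !bf_e (JJ0 hw hk hk) (JJ0 hw hk hl) (JJ0 hw hl hk) (JJ0 hw hl hl).
rewrite (msym k (o4 p) hs) (msym k (w4 p) hs) (msym l (o4 p) hs) (msym l (w4 p) hs).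
move=> /(_ erefl erefl erefl erefl); rewrite mulf_neq0 //; last first.
  by move: hD; apply: contra => /eqP h; apply/eqP; rewrite -h; ring.
move/(_ isT); rewrite leqNgt; move: hr; rewrite ltnS => ->. done.
Qed.

Lemma par_zero (K : fieldType) (I : Type) (J : I -> bool) (u1 u2 z : I -> K) k0 l0 :
  (forall k l, J k -> J l -> u1 k * z l = u1 l * z k) ->
  (forall k l, J k -> J l -> u2 k * z l = u2 l * z k) ->
  J k0 -> J l0 -> u1 k0 * u2 l0 - u1 l0 * u2 k0 != 0 ->
  forall k, J k -> z k = 0.
Proof.
move=> h1 h2 hk0 hl0 hD k hk.
have zl0 : z l0 = 0.
  have : (u1 k0 * u2 l0 - u1 l0 * u2 k0) * z l0 = 0.
    have -> : (u1 k0 * u2 l0 - u1 l0 * u2 k0) * z l0 =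
       u2 l0 * (u1 k0 * z l0) - u1 l0 * (u2 k0 * z l0) by ring.
    by rewrite (h1 k0 l0) // (h2 k0 l0) //; ring.
  by move/eqP; rewrite mulf_eq0 (negbTE hD) /= => /eqP.
have zk0 : z k0 = 0.
  have : (u1 k0 * u2 l0 - u1 l0 * u2 k0) * z k0 = 0.
    have -> : (u1 k0 * u2 l0 - u1 l0 * u2 k0) * z k0 =
       u1 k0 * (u2 l0 * z k0) - u2 k0 * (u1 l0 * z k0) by ring.
    by rewrite -(h1 k0 l0) // -(h2 k0 l0) //; ring.
  by move/eqP; rewrite mulf_eq0 (negbTE hD) /= => /eqP.
have e1 : u1 k0 * z k = 0 by rewrite (h1 k0 k) // zk0 mulr0.
have e2 : u2 k0 * z k = 0 by rewrite (h2 k0 k) // zk0 mulr0.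
case: (eqVneq (u1 k0) 0) => [u10|u10].
  case: (eqVneq (u2 k0) 0) => [u20|u20].
    by move: hD; rewrite u10 u20 !mul0r mulr0 subrr eqxx.
  by move/eqP: e2; rewrite mulf_eq0 (negbTE u20) => /eqP.
by move/eqP: e1; rewrite mulf_eq0 (negbTE u10) => /eqP.
Qed.

Lemma polar_alg (K : fieldType) (a b c d a' b' c' d' : K) :
  a * b = c * d -> a' * b' = c' * d' -> (a + a') * (b + b') = (c + c') * (d + d') ->
  a * b' + a' * b = c * d' + c' * d.
Proof.
move=> e1 e2 e3; apply/eqP; rewrite -subr_eq0.
have -> : a * b' + a' * b - (c * d' + c' * d) =
  ((a + a') * (b + b') - (c + c') * (d + d')) - (a * b - c * d) - (a' * b' - c' * d') by ring.
by rewrite e1 e2 e3 !subrr ?subr0.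
Qed.


Lemma polarS (K : fieldType) p (S : 'M[K]_p.+4 -> Prop)
  (hadd : forall M N, S M -> S N -> S (M + N))
  (hsym : forall M, S M -> M^T = M)
  (hrk : forall M, S M -> (\rank M <= 3)%N)
  (hws : forall M, S M -> WSh M) M N k l :
  S M -> S N -> J4 k -> J4 l ->
  M (o4 p) k * N (w4 p) l + N (o4 p) k * M (w4 p) l =
  M (o4 p) l * N (w4 p) k + N (o4 p) l * M (w4 p) k.
Proof.
move=> hM hN hk hl.
apply: (@polar_alg K (M (o4 p) k) (M (w4 p) l) (M (o4 p) l) (M (w4 p) k)
  (N (o4 p) k) (N (w4 p) l) (N (o4 p) l) (N (w4 p) k)).
- exact (F1 (hsym _ hM) (hrk _ hM) (hws _ hM) hk hl).
- exact (F1 (hsym _ hN) (hrk _ hN) (hws _ hN) hk hl).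
have hMN := hadd _ _ hM hN.
by have := F1 (hsym _ hMN) (hrk _ hMN) (hws _ hMN) hk hl; rewrite !mxE.
Qed.

Lemma GS (K : fieldType) p (S : 'M[K]_p.+4 -> Prop)
  (hadd : forall M N, S M -> S N -> S (M + N))
  (hsym : forall M, S M -> M^T = M)
  (hrk : forall M, S M -> (\rank M <= 3)%N)
  (hws : forall M, S M -> WSh M) N t M :
  S N -> (forall j, J4 j -> N (w4 p) j = t * N (o4 p) j) -> S M ->
  forall k l, J4 k -> J4 l ->
  N (o4 p) k * (M (w4 p) l - t * M (o4 p) l) = N (o4 p) l * (M (w4 p) k - t * M (o4 p) k).
Proof.
move=> hN hNt hM k l hk hl.
have e := polarS hadd hsym hrk hws hM hN hk hl.
rewrite (hNt l hl) (hNt k hk) in e.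
apply/eqP; rewrite -subr_eq0.
set A := M (o4 p) k * (t * N (o4 p) l) + N (o4 p) k * M (w4 p) l.
set B := M (o4 p) l * (t * N (o4 p) k) + N (o4 p) l * M (w4 p) k.
have -> : N (o4 p) k * (M (w4 p) l - t * M (o4 p) l) -
  N (o4 p) l * (M (w4 p) k - t * M (o4 p) k) = A - B by rewrite /A /B; ring.
by rewrite /A /B e subrr.
Qed.

Lemma F3 (K : fieldType) p (S : 'M[K]_p.+4 -> Prop)
  (hadd : forall M N, S M -> S N -> S (M + N))
  (hsym : forall M, S M -> M^T = M)
  (hrk : forall M, S M -> (\rank M <= 3)%N)
  (hws : forall M, S M -> WSh M) M1 M2 k0 l0 :
  S M1 -> S M2 -> J4 k0 -> J4 l0 ->
  M1 (o4 p) k0 * M2 (o4 p) l0 - M1 (o4 p) l0 * M2 (o4 p) k0 != 0 ->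
  exists t, forall M, S M -> forall k, J4 k -> M (w4 p) k = t * M (o4 p) k.
Proof.
move=> h1 h2 hk0 hl0 hD.
have [ks [hks hnz]] : exists ks, J4 ks /\ M1 (o4 p) ks != 0.
  case: (eqVneq (M1 (o4 p) k0) 0) => [e|e]; last by exists k0.
  case: (eqVneq (M1 (o4 p) l0) 0) => [e'|e']; last by exists l0.
  by move: hD; rewrite e e' !mul0r subrr eqxx.
set t := M1 (w4 p) ks / M1 (o4 p) ks.
have ht1 : forall j, J4 j -> M1 (w4 p) j = t * M1 (o4 p) j.
  move=> j hj.
  have e := F1 (hsym _ h1) (hrk _ h1) (hws _ h1) hks hj.
  apply: (mulfI hnz); rewrite e /t; field; exact: hnz.
pose z (M : 'M[K]_p.+4) j := M (w4 p) j - t * M (o4 p) j.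
have ht2 : forall j, J4 j -> M2 (w4 p) j = t * M2 (o4 p) j.
  move=> j hj; apply/eqP; rewrite -subr_eq0; apply/eqP.
  apply: (@par_zero K _ (@J4 p) (fun j => M1 (o4 p) j) (fun j => M2 (o4 p) j) (z M2) k0 l0) => //.
    by move=> k l hk hl; apply: (GS hadd hsym hrk hws h1 ht1 h2).
  move=> k l hk hl; rewrite /z.
  have e := F1 (hsym _ h2) (hrk _ h2) (hws _ h2) hk hl.
  rewrite !mulrBr e; ring.
exists t => M hM j hj; apply/eqP; rewrite -subr_eq0; apply/eqP.
apply: (@par_zero K _ (@J4 p) (fun j => M1 (o4 p) j) (fun j => M2 (o4 p) j) (z M) k0 l0) => //.
  by move=> k l hk hl; apply: (GS hadd hsym hrk hws h1 ht1 hM).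
by move=> k l hk hl; apply: (GS hadd hsym hrk hws h2 ht2 hM).
Qed.

Definition ff (K : fieldType) p (t : K) : 'rV[K]_p.+4 := 'e_(w4 p) - t *: 'e_(o4 p).
Arguments ff {K p} t.

Lemma bf_kf (K : fieldType) p (M : 'M[K]_p.+4) t k :
  M^T = M -> M (w4 p) k = t * M (o4 p) k -> bf M 'e_k (ff t) = 0.
Proof.
move=> hs e; rewrite /ff bfBr bfZr !bf_e (msym k (w4 p) hs) (msym k (o4 p) hs) e.
by rewrite subrr.
Qed.

Lemma F4 (K : fieldType) p (M : 'M[K]_p.+4) (f : 'rV[K]_p.+4) k :
  M^T = M -> (\rank M <= 3)%N -> WSh M -> J4 k ->
  bf M 'e_k f = 0 ->
  M (o4 p) k != 0 ->
  bf M 'e_(i14 p) 'e_(i14 p) * bf M f f = bf M 'e_(i14 p) f ^+ 2.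
Proof.
move=> hs hr hw hk hkf hnz.
have hko : M k (o4 p) != 0 by rewrite (msym k (o4 p) hs).
have hk1 : M k (i14 p) = 0 by rewrite (msym k (i14 p) hs) (J10 hw hk).
have hkk : M k k = 0 by rewrite (JJ0 hw hk hk).
set al := M (i14 p) (o4 p) / M k (o4 p).
set be := bf M f 'e_(o4 p) / M k (o4 p).
apply/eqP; rewrite -subr_eq0; apply/negPn/negP => hD.
have := @rank4u K _ M 'e_k 'e_(o4 p) 'e_k 'e_(o4 p)
  ('e_(i14 p) - al *: 'e_k) (f - be *: 'e_k) 'e_(i14 p) f.
rewrite !bfBl !bfZl !bf_e hk1 hkk hkf (bf_sym f 'e_k hs) hkf.
rewrite !mulr0 !subr0 (bf_sym f 'e_(i14 p) hs).
have -> : M (i14 p) (o4 p) - al * M k (o4 p) = 0 by rewrite /al divfK // subrr.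
have -> : bf M f 'e_(o4 p) - be * M k (o4 p) = 0 by rewrite /be divfK // subrr.
rewrite (J10 hw hk).
move=> /(_ erefl erefl erefl erefl).
rewrite mul0r sub0r mulf_neq0 //; last first.
  by rewrite expr2 bf_e in hD; exact: hD.
  by rewrite oppr_eq0 mulf_neq0 // (msym (o4 p) k hs).
move/(_ isT); rewrite leqNgt; move: hr; rewrite ltnS => ->. done.
Qed.

Lemma quad_alg (K : fieldType) (x y z x1 y1 z1 x2 y2 z2 : K) :
  x1 * z1 = y1 ^+ 2 -> x2 * z2 = y2 ^+ 2 -> (x1 + x2) * (z1 + z2) = (y1 + y2) ^+ 2 ->
  (x + x1) * (z + z1) = (y + y1) ^+ 2 -> (x + x2) * (z + z2) = (y + y2) ^+ 2 ->
  (x + (x1 + x2)) * (z + (z1 + z2)) = (y + (y1 + y2)) ^+ 2 -> x * z = y ^+ 2.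
Proof.
move=> e1 e2 e3 e4 e5 e6; apply/eqP; rewrite -subr_eq0.
have -> : x * z - y ^+ 2 =
  ((x + x1) * (z + z1) - (y + y1) ^+ 2) + ((x + x2) * (z + z2) - (y + y2) ^+ 2)
  - ((x + (x1 + x2)) * (z + (z1 + z2)) - (y + (y1 + y2)) ^+ 2)
  + ((x1 + x2) * (z1 + z2) - (y1 + y2) ^+ 2) - (x1 * z1 - y1 ^+ 2) - (x2 * z2 - y2 ^+ 2)
  by ring.
by rewrite e1 e2 e3 e4 e5 e6 !subrr !addr0 ?subrr.
Qed.

Definition nzA (K : fieldType) p (M : 'M[K]_p.+4) := exists k, J4 k /\ M (o4 p) k != 0.

Lemma F5 (K : fieldType) p (S : 'M[K]_p.+4 -> Prop)
  (hadd : forall M N, S M -> S N -> S (M + N))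
  (hsym : forall M, S M -> M^T = M)
  (hrk : forall M, S M -> (\rank M <= 3)%N)
  (hws : forall M, S M -> WSh M) M1 M2 k0 l0 t :
  S M1 -> S M2 -> J4 k0 -> J4 l0 ->
  M1 (o4 p) k0 * M2 (o4 p) l0 - M1 (o4 p) l0 * M2 (o4 p) k0 != 0 ->
  (forall M, S M -> forall k, J4 k -> M (w4 p) k = t * M (o4 p) k) ->
  forall M, S M ->
  bf M 'e_(i14 p) 'e_(i14 p) * bf M (ff t) (ff t) = bf M 'e_(i14 p) (ff t) ^+ 2.
Proof.
move=> h1 h2 hk0 hl0 hD ht.
have hnz : forall M, S M -> nzA M ->
    bf M 'e_(i14 p) 'e_(i14 p) * bf M (ff t) (ff t) = bf M 'e_(i14 p) (ff t) ^+ 2.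
  move=> M hM [k [hk hn]].
  apply: (F4 (hsym _ hM) (hrk _ hM) (hws _ hM) hk) => //.
  exact: bf_kf (hsym _ hM) (ht _ hM k hk).
have hA1 : nzA M1.
  case: (eqVneq (M1 (o4 p) k0) 0) => [e|e]; last by exists k0.
  case: (eqVneq (M1 (o4 p) l0) 0) => [e'|e']; last by exists l0.
  by move: hD; rewrite e e' !mul0r subrr eqxx.
have hA2 : nzA M2.
  case: (eqVneq (M2 (o4 p) k0) 0) => [e|e]; last by exists k0.
  case: (eqVneq (M2 (o4 p) l0) 0) => [e'|e']; last by exists l0.
  by move: hD; rewrite e e' !mulr0 subrr eqxx.
have hA12 : nzA (M1 + M2).
  case: (eqVneq ((M1 + M2) (o4 p) k0) 0) => [e|e]; last by exists k0.
  case: (eqVneq ((M1 + M2) (o4 p) l0) 0) => [e'|e']; last by exists l0.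
  move: hD; rewrite !mxE in e e'.
  rewrite (_ : M2 (o4 p) k0 = - M1 (o4 p) k0); last by apply/eqP; rewrite -addr_eq0 addrC e.
  rewrite (_ : M2 (o4 p) l0 = - M1 (o4 p) l0); last by apply/eqP; rewrite -addr_eq0 addrC e'.
  by rewrite mulrN mulrN opprK mulrC addNr eqxx.
move=> M hM.
case: (classic (nzA M)) => [hA|hA]; first exact: hnz.
have hz : forall k, J4 k -> M (o4 p) k = 0.
  move=> k hk; apply/eqP; apply/negPn/negP => hn; apply: hA; by exists k.
have hshift : forall N, nzA N -> nzA (M + N).
  move=> N [k [hk hn]]; exists k; split => //; by rewrite mxE hz // add0r.
have q1 := hnz _ h1 hA1.
have q2 := hnz _ h2 hA2.
have q12 := hnz _ (hadd _ _ h1 h2) hA12.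
have qM1 := hnz _ (hadd _ _ hM h1) (hshift _ hA1).
have qM2 := hnz _ (hadd _ _ hM h2) (hshift _ hA2).
have qM12 := hnz _ (hadd _ _ hM (hadd _ _ h1 h2)) (hshift _ hA12).
rewrite !bfM in q12 qM1 qM2 qM12.
exact: quad_alg q1 q2 q12 qM1 qM2 qM12.
Qed.

Lemma matE (K : fieldType) n a b (M : 'M[K]_n) (u : 'I_a -> 'rV[K]_n) (v : 'I_b -> 'rV[K]_n) i j :
  ((\matrix_i u i) *m M *m (\matrix_j v j)^T) i j = bf M (u i) (v j).
Proof.
rewrite /bf !mxE; apply: eq_bigr => k _.
rewrite !mxE; congr (_ * _).
by apply: eq_bigr => l _; rewrite !mxE.
Qed.

Definition qrow (K : fieldType) p (P R : 'rV[K]_p.+4) (i : 'I_p.+4) : 'rV[K]_p.+4 :=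
  if i == i14 p then P else if i == w4 p then R else 'e_i.

Definition Qm (K : fieldType) p (P R : 'rV[K]_p.+4) : 'M[K]_p.+4 :=
  \matrix_i qrow P R i.

Lemma classify p (i : 'I_p.+4) : (1 <= i)%N -> i = i14 p \/ i = w4 p \/ J4 i.
Proof.
move=> hi; case: (eqVneq i (i14 p)) => [->|h1]; first by left.
case: (eqVneq i (w4 p)) => [->|h2]; first by right; left.
right; right; rewrite /J4.
move: h1 h2; rewrite -!val_eqE /= => h1 h2.
have := ltn_ord i; move: hi h1 h2; case: i => [i Hi] /=; lia.
Qed.

Lemma J4_neq p (i : 'I_p.+4) : J4 i -> (i == i14 p) = false /\ (i == w4 p) = false.
Proof.
rewrite /J4 => /andP[h1 h2]; split; apply/negbTE; rewrite -val_eqE /=; lia.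
Qed.

Lemma WS_Q (K : fieldType) p (M : 'M[K]_p.+4) (P R : 'rV[K]_p.+4) :
  M^T = M -> WSh M ->
  (forall j, J4 j -> bf M P 'e_j = 0) -> (forall j, J4 j -> bf M R 'e_j = 0) ->
  bf M P R = 0 -> bf M R R = 0 ->
  WS11 (Qm P R *m M *m (Qm P R)^T).
Proof.
move=> hs hw hP hR hPR hRR; split.
  by rewrite !trmx_mul trmxK hs mulmxA.
move=> i j hi hj hmax; rewrite matE /qrow.
have ew : (w4 p == i14 p) = false by [].
have ei : (i14 p == w4 p) = false by [].
move: hmax; case: (classify hi) => [->|[->|hJi]]; case: (classify hj) => [->|[->|hJj]] => hmax.
- by move: hmax.
- by rewrite !eqxx ?ei ?ew /=.
- by case: (J4_neq hJj) => -> ->; rewrite !eqxx /= hP.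
- by rewrite !eqxx ?ei ?ew /= bf_sym.
- by rewrite !eqxx ?ei ?ew /=.
- by case: (J4_neq hJj) => -> ->; rewrite !eqxx ?ei ?ew /= hR.
- by case: (J4_neq hJi) => -> ->; rewrite !eqxx /= bf_sym // hP.
- by case: (J4_neq hJi) => -> ->; rewrite !eqxx ?ei ?ew /= bf_sym // hR.
- case: (J4_neq hJi) => -> ->; case: (J4_neq hJj) => -> ->.
  by rewrite bf_e (JJ0 hw hJi hJj).
Qed.

Lemma unit_Q (K : fieldType) p (P R : 'rV[K]_p.+4) :
  (('e_(i14 p) : 'rV[K]_p.+4) <= Qm P R)%MS -> (('e_(w4 p) : 'rV[K]_p.+4) <= Qm P R)%MS -> Qm P R \in unitmx.
Proof.
move=> h1 hw; rewrite -row_full_unit -sub1mx; apply/row_subP => i; rewrite row1.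
case: (eqVneq i (i14 p)) => [->|n1] //.
case: (eqVneq i (w4 p)) => [->|n2] //.
have -> : 'e_i = row i (Qm P R) by rewrite rowK /qrow (negbTE n1) (negbTE n2).
exact: row_sub.
Qed.

Lemma rowQ (K : fieldType) p (P R : 'rV[K]_p.+4) i :
  (qrow P R i <= Qm P R)%MS.
Proof. by rewrite -(rowK (qrow P R) i); exact: row_sub. Qed.

Lemma rowQ' (K : fieldType) p (P R : 'rV[K]_p.+4) i v :
  qrow P R i = v -> (v <= Qm P R)%MS.
Proof. by move=> <-; exact: rowQ. Qed.

Lemma rank1_alg (K : fieldType) (x y z xs ys zs : K) :
  zs != 0 -> x * z = y ^+ 2 -> xs * zs = ys ^+ 2 ->
  (x + xs) * (z + zs) = (y + ys) ^+ 2 ->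
  y = ys / zs * z /\ x = (ys / zs) ^+ 2 * z.
Proof.
move=> hz e1 e2 e3.
have e4 : x * zs + xs * z = 2 * y * ys.
  apply/eqP; rewrite -subr_eq0; apply/eqP.
  have -> : x * zs + xs * z - 2 * y * ys =
    ((x + xs) * (z + zs) - (y + ys) ^+ 2) - (x * z - y ^+ 2) - (xs * zs - ys ^+ 2) by ring.
  by rewrite e1 e2 e3 !subrr ?subr0.
have e5 : y * zs = ys * z.
  apply/eqP; rewrite -subr_eq0; apply/eqP.
  have : (y * zs - ys * z) ^+ 2 = 0.
    have -> : (y * zs - ys * z) ^+ 2 =
      z * zs * ((x * zs + xs * z) - 2 * y * ys) - zs ^+ 2 * (x * z - y ^+ 2)
      - z ^+ 2 * (xs * zs - ys ^+ 2) by ring.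
    by rewrite e4 e1 e2 !subrr !mulr0 ?subr0.
  by move/eqP; rewrite sqrf_eq0 => /eqP.
have ey : y = ys / zs * z.
  apply: (mulIf hz); rewrite e5; field; exact: hz.
split => //.
have e6 : x * zs * zs = ys ^+ 2 * z.
  have -> : x * zs * zs = zs * (x * zs + xs * z) - z * (xs * zs) by ring.
  rewrite e4 e2.
  have -> : zs * (2 * y * ys) = 2 * ys * (y * zs) by ring.
  rewrite e5; ring.
apply: (mulIf hz); apply: (mulIf hz); rewrite e6; field; exact: hz.
Qed.

Lemma core (K : fieldType) p (S : 'M[K]_p.+4 -> Prop)
  (hadd : forall M N, S M -> S N -> S (M + N))
  (hsym : forall M, S M -> M^T = M)
  (hrk : forall M, S M -> (\rank M <= 3)%N)
  (hws : forall M, S M -> WSh M) M1 M2 k0 l0 :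
  S M1 -> S M2 -> J4 k0 -> J4 l0 ->
  M1 (o4 p) k0 * M2 (o4 p) l0 - M1 (o4 p) l0 * M2 (o4 p) k0 != 0 ->
  exists2 Q : 'M[K]_p.+4, Q \in unitmx & forall M, S M -> WS11 (Q *m M *m Q^T).
Proof.
move=> h1 h2 hk0 hl0 hD.
have [t ht] := F3 hadd hsym hrk hws h1 h2 hk0 hl0 hD.
have hq := F5 hadd hsym hrk hws h1 h2 hk0 hl0 hD ht.
pose f : 'rV[K]_p.+4 := ff t.
have hq0 := hq; rewrite -/f in hq.
have hkf : forall M, S M -> forall j, J4 j -> bf M 'e_j f = 0.
  by move=> M hM j hj; apply: bf_kf (hsym _ hM) (ht _ hM j hj).
have hfk : forall M, S M -> forall j, J4 j -> bf M f 'e_j = 0.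
  by move=> M hM j hj; rewrite bf_sym ?hkf //; exact: hsym.
have h1k : forall M, S M -> forall j, J4 j -> bf M 'e_(i14 p) 'e_j = 0.
  by move=> M hM j hj; rewrite bf_e (J10 (hws _ hM) hj).
have hw : forall P R : 'rV[K]_p.+4, qrow P R (o4 p) = 'e_(o4 p) by [].
have ew : forall P R : 'rV[K]_p.+4,
    (f <= Qm P R)%MS -> (('e_(w4 p) : 'rV[K]_p.+4) <= Qm P R)%MS.
  move=> P R hf.
  have -> : ('e_(w4 p) : 'rV[K]_p.+4) = f + t *: 'e_(o4 p) by rewrite /f /ff subrK.
  apply: addmx_sub hf _; apply: scalemx_sub; rewrite -(hw P R); exact: rowQ.
case: (classic (exists2 Ms, S Ms & bf Ms f f != 0)) => [[Ms hMs hz]|hnz].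
  set s := bf Ms 'e_(i14 p) f / bf Ms f f.
  exists (Qm f ('e_(i14 p) - s *: f)).
    have hf : (f <= Qm f ('e_(i14 p) - s *: f))%MS.
      by apply: (@rowQ' _ _ _ _ (i14 p)); rewrite /qrow eqxx.
    apply: unit_Q; last exact: ew.
    have E : ('e_(i14 p) - s *: f) + s *: f = ('e_(i14 p) : 'rV[K]_p.+4) by rewrite subrK.
    rewrite -{1}E.
    apply: addmx_sub; last exact: (scalemx_sub s hf).
    by apply: (@rowQ' _ _ _ _ (w4 p)); rewrite /qrow eqxx.
  move=> M hM.
  have hs := hsym _ hM.
  have e3 := hq _ (hadd _ _ hM hMs); rewrite !bfM in e3.
  have [ey ex] := rank1_alg hz (hq _ hM) (hq _ hMs) e3.
  apply: WS_Q => //.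
  - exact: hws.
  - exact: hfk.
  - move=> j hj; rewrite bfBl bfZl h1k // hfk // mulr0 subr0 //.
  - rewrite bfBr bfZr (bf_sym f 'e_(i14 p) hs) ey -/s; ring.
  - rewrite !bfBl !bfZl !bfBr !bfZr (bf_sym f 'e_(i14 p) hs) ey ex -/s; ring.
exists (Qm 'e_(i14 p) f).
  apply: unit_Q; last first.
    by apply: ew; apply: (@rowQ' _ _ _ _ (w4 p)); rewrite /qrow eqxx.
  by apply: (@rowQ' _ _ _ _ (i14 p)); rewrite /qrow eqxx.
move=> M hM.
have hs := hsym _ hM.
have hz : bf M f f = 0.
  by apply/eqP; apply/negPn/negP => hn; apply: hnz; exists M.
have hy : bf M 'e_(i14 p) f = 0.
  by move: (hq _ hM); rewrite hz mulr0 => /esym/eqP; rewrite sqrf_eq0 => /eqP.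
apply: WS_Q => //.
- exact: hws.
- exact: h1k.
- exact: hfk.
Qed.

Fact upleft_semilinear (K : fieldType) n : semilinear (@upleft K n).
Proof. by split=> [a A|A B]; apply/matrixP => i j; rewrite !mxE. Qed.
HB.instance Definition _ (K : fieldType) n :=
  GRing.isSemilinear.Build K 'M[K]_n 'M[K]_n.-1 _ (@upleft K n) (upleft_semilinear K n).

Lemma WSh_of (K : fieldType) p (M : 'M[K]_p.+4) : WS11 (upleft M) -> WSh M.
Proof.
case=> _ h x y /andP[hx1 hx] /andP[hy1 hy] hm.
have := h (Ordinal hx) (Ordinal hy) hx1 hy1 hm; rewrite mxE.
have -> : widen_ord (leq_pred p.+4) (Ordinal hx) = x by apply/val_inj.
by have -> : widen_ord (leq_pred p.+4) (Ordinal hy) = y by apply/val_inj.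
Qed.

Lemma classify0 p (x : 'I_p.+4) : (x < p.+3)%N -> x = o4 p \/ x = i14 p \/ J4 x.
Proof.
move=> hx; case: (posnP x) => [h0|hp].
  by left; apply/val_inj.
right; case: (classify hp) => [h|[h|h]]; [by left | | by right].
by move: hx; rewrite h /= ltnn.
Qed.

Lemma J4v p (x : 'I_p.+4) : J4 x -> [/\ (nat_of_ord x == 0%N) = false, (nat_of_ord x == 1%N) = false & (2 <= nat_of_ord x)%N].
Proof. by case/andP; case: x => [[|[|k]] Hk]. Qed.

Lemma entry_helper (K : fieldType) p (M : 'M[K]_p.+4) (u : 'I_p.+4 -> K) la :
  M^T = M -> WSh M -> (forall j, J4 j -> M (o4 p) j = la * u j) ->
  forall x y : 'I_p.+4, (x < p.+3)%N -> (y < p.+3)%N ->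
  M x y = M (o4 p) (o4 p) * ((nat_of_ord x == 0%N) && (nat_of_ord y == 0%N))%:R
        + M (o4 p) (i14 p) * (((nat_of_ord x == 0%N) && (nat_of_ord y == 1%N)) || ((nat_of_ord x == 1%N) && (nat_of_ord y == 0%N)))%:R
        + M (i14 p) (i14 p) * ((nat_of_ord x == 1%N) && (nat_of_ord y == 1%N))%:R
        + la * (if (nat_of_ord x == 0%N) && (2 <= nat_of_ord y)%N then u y
                else if (nat_of_ord y == 0%N) && (2 <= nat_of_ord x)%N then u x else 0).
Proof.
move=> hs hw hla x y hx hy.
case: (classify0 hx) => [->|[->|hJx]]; case: (classify0 hy) => [->|[->|hJy]] /=.
- by rewrite mulr1 !mulr0 !addr0.
- by rewrite mulr1 !mulr0 !addr0 add0r.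
- case: (J4v hJy) => -> -> -> /=; rewrite hla //; by rewrite !mulr0 !add0r.
- by rewrite (msym _ _ hs) mulr1 !mulr0 !addr0 add0r.
- by rewrite mulr1 !mulr0 !addr0 !add0r.
- case: (J4v hJy) => -> -> _ /=; rewrite (J10 hw hJy); by rewrite !mulr0 !addr0.
- case: (J4v hJx) => -> -> -> /=; rewrite (msym _ _ hs) hla //; by rewrite !mulr0 !add0r.
- case: (J4v hJx) => -> -> _ /=; rewrite (msym _ _ hs) (J10 hw hJx); by rewrite !mulr0 !addr0.
- case: (J4v hJx) => e1 e2 e3; case: (J4v hJy) => f1 f2 f3.
  by rewrite ?e1 ?e2 ?e3 ?f1 ?f2 ?f3 /= ?e1 ?e2 ?e3 ?f1 ?f2 ?f3 (JJ0 hw hJx hJy) !mulr0 !addr0.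
Qed.

Lemma dim_bound (K : fieldType) p (S : {vspace 'M[K]_p.+4}) :
  (forall M, M \in S -> M^T = M) -> (forall M, M \in S -> WSh M) ->
  (forall M1 M2, M1 \in S -> M2 \in S -> forall k l, J4 k -> J4 l ->
     M1 (o4 p) k * M2 (o4 p) l - M1 (o4 p) l * M2 (o4 p) k = 0) ->
  (\dim (linfun (@upleft K p.+4) @: S) <= 4)%N.
Proof.
move=> hsym hws H.
have [u hu] : exists u : 'I_p.+4 -> K, forall M, M \in S ->
    exists la, forall j, J4 j -> M (o4 p) j = la * u j.
  case: (classic (exists M0, M0 \in S /\ exists k, J4 k /\ M0 (o4 p) k != 0)).
    move=> [M0 [h0 [k [hk hn]]]].
    exists (fun j => M0 (o4 p) j) => M hM; exists (M (o4 p) k / M0 (o4 p) k) => j hj.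
    have e := H _ _ h0 hM _ _ hk hj.
    apply: (mulfI hn).
    have -> : M0 (o4 p) k * M (o4 p) j = M0 (o4 p) j * M (o4 p) k.
      by apply/eqP; rewrite -subr_eq0 e.
    field; exact: hn.
  move=> hn; exists (fun _ => 0) => M hM; exists 0 => j hj; rewrite mulr0.
  apply/eqP; apply/negPn/negP => hnz; apply: hn; exists M; split => //; exists j; split => //.
pose wd := widen_ord (leq_pred p.+4).
pose A1 : 'M[K]_p.+3 := \matrix_(i, j) ((nat_of_ord (wd i) == 0%N) && (nat_of_ord (wd j) == 0%N))%:R.
pose A2 : 'M[K]_p.+3 := \matrix_(i, j) (((nat_of_ord (wd i) == 0%N) && (nat_of_ord (wd j) == 1%N))
    || ((nat_of_ord (wd i) == 1%N) && (nat_of_ord (wd j) == 0%N)))%:R.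
pose A3 : 'M[K]_p.+3 := \matrix_(i, j) ((nat_of_ord (wd i) == 1%N) && (nat_of_ord (wd j) == 1%N))%:R.
pose A4 : 'M[K]_p.+3 := \matrix_(i, j)
   (if (nat_of_ord (wd i) == 0%N) && (2 <= nat_of_ord (wd j))%N then u (wd j)
    else if (nat_of_ord (wd j) == 0%N) && (2 <= nat_of_ord (wd i))%N then u (wd i) else 0).
apply: leq_trans (dimvS (_ : (_ <= <<[:: A1; A2; A3; A4]>>)%VS)) _; last exact: dim_span.
apply/subvP => X /memv_imgP [M hM ->]; rewrite lfunE /=.
have [la hla] := hu M hM.
have -> : upleft M = M (o4 p) (o4 p) *: A1 + M (o4 p) (i14 p) *: A2
    + M (i14 p) (i14 p) *: A3 + la *: A4.
  apply/matrixP => i j; rewrite !mxE.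
  by apply: (entry_helper (hsym _ hM) (hws _ hM) hla); rewrite /wd /=; exact: ltn_ord.
by rewrite !memvD ?memvZ ?memv_span ?inE ?eqxx ?orbT.
Qed.

Unset Implicit Arguments.

Theorem lemma4p8 (K : fieldType) (n : nat) (S : {vspace 'M[K]_n}) :
  (4 <= n)%N ->
  (forall M, M \in S -> M^T = M) ->
  (forall M, M \in S -> (\rank M <= 3)%N) ->
  (forall M, M \in S -> WS11 (upleft M)) ->
  (5 < \dim (linfun (@upleft K n) @: S))%N ->
  exists2 Q : 'M[K]_n, Q \in unitmx & forall M, M \in S -> WS11 (Q *m M *m Q^T).
Proof.
move: S; case: n => [|[|[|[|p]]]] // S _ hsym hrk hws hdim.
have hwsh : forall M, M \in S -> WSh M by move=> M hM; apply: WSh_of; exact: hws.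
case: (classic (exists M1 M2 k l, [/\ M1 \in S, M2 \in S, J4 k, J4 l &
   M1 (o4 p) k * M2 (o4 p) l - M1 (o4 p) l * M2 (o4 p) k != 0])).
  move=> [M1 [M2 [k [l [h1 h2 hk hl hD]]]]].
  apply: (@core K p (fun M => M \in S)) h1 h2 hk hl hD.
  - by move=> M N hM hN; exact: memvD.
  - exact: hsym.
  - exact: hrk.
  - exact: hwsh.
move=> hn; exfalso.
have := dim_bound hsym hwsh.
have H : forall M1 M2, M1 \in S -> M2 \in S -> forall k l, J4 k -> J4 l ->
     M1 (o4 p) k * M2 (o4 p) l - M1 (o4 p) l * M2 (o4 p) k = 0.
  move=> M1 M2 h1 h2 k l hk hl; apply/eqP; apply/negPn/negP => hD.
  by apply: hn; exists M1, M2, k, l.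
move/(_ H) => hle.
by move: (leq_trans hdim hle).
Qed.
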